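(* For all $n\ge1$, $$\varphi_n=2(n-1)H_n+2P_n,\qquad \theta_n=(2n-1)P_n.$$
   Context: Let $s=\sqrt3/2$. Consider the standard triangular lattice in the plane whose vertices are the points $(a+b/2,\,bs)$ with $a,b\in\mathbb Z$ and whose edges are the unit segments joining lattice points in the directions $0^\circ,60^\circ,120^\circ$; it divides the plane into unit equilateral triangles called cells. A small tile is a single cell; a large tile is an equilateral triangle of side $2$ whose vertices are lattice points (so it is a union of $4$ cells; it may point up or down). For a region $R$ that is a finite union of cells, a tiling of $R$ is a finite set of small and large tiles, each contained in $R$, with pairwise disjoint interiors and union equal to $R$. For $n\ge1$, the region $H_n$ is the union of the trapezoid with vertices $(0,0),(n,0),(n-\tfrac12,s),(\tfrac12,s)$ and the trapezoid with vertices $(\tfrac12,s),(n-\tfrac12,s),(n,2s),(0,2s)$ ($4n-2$ cells; for $n=1$ two unit triangles meeting at a point), and $P_n$ is $H_n$ with the cell with vertices $(n-1,0),(n,0),(n-\tfrac12,s)$ removed. $H_n$ and $P_n$ also denote the numbers of tilings of these regions; thus $H_n=\frac{(1+\sqrt2)^n+(1-\sqrt2)^n}{2}$ and $P_n=\frac{(1+\sqrt2)^n-(1-\sqrt2)^n}{2\sqrt2}$. Define $\varphi_n$ (resp. $\theta_n$) as the sum, over all tilings of $H_n$ (resp. $P_n$), of the number of small tiles in the tiling. *)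

(* Defs.v *)
From HB Require Import structures.
From mathcomp Require Import all_boot all_order all_algebra.
Set Implicit Arguments. Unset Strict Implicit. Unset Printing Implicit Defensive.
Import Order.TTheory GRing.Theory Num.Theory.

(* Lattice coordinates: the lattice point (a,b) : int * int is the point
   (a + b/2, b*s) of the plane, s = sqrt 3 / 2.

   A cell is encoded as (up, a, b):
   - (true,  a, b) = upward cell with vertices (a,b), (a+1,b), (a,b+1);
   - (false, a, b) = downward cell with vertices (a,b+1), (a+1,b+1), (a+1,b). *)
Definition cell := (bool * int * int)%type.

(* A tile is (large, c).  (false, c) is the small tile consisting of cell c.
   (true, (true, a, b))  is the upward large tile with vertices
       (a,b), (a+2,b), (a,b+2);
   (true, (false, a, b)) is the downward large tile with vertices
       (a,b+2), (a+2,b+2), (a+2,b). *)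
Definition tile := (bool * cell)%type.

Local Open Scope ring_scope.

Definition tile_cells (t : tile) : seq cell :=
  match t with
  | (false, c) => [:: c]
  | (true, (true, a, b)) =>
      [:: (true, a, b); (true, a + 1, b); (true, a, b + 1); (false, a, b)]
  | (true, (false, a, b)) =>
      [:: (false, a + 1, b); (false, a, b + 1); (false, a + 1, b + 1);
          (true, a + 1, b + 1)]
  end.

Definition is_small (t : tile) : bool := ~~ t.1.

Definition H_cells (n : nat) : seq cell :=
  [seq (true, i%:Z, 0%:Z) | i <- iota 0 n] ++
  [seq (false, i%:Z, 0%:Z) | i <- iota 0 n.-1] ++
  [seq (true, i%:Z, 1%:Z) | i <- iota 0 n.-1] ++
  [seq (false, i%:Z - 1, 1%:Z) | i <- iota 0 n].

(* P_n : H_n minus the cell with vertices (n-1,0),(n,0),(n-1/2,s),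
   i.e. the up cell (n-1, 0). *)
Definition P_cells (n : nat) : seq cell :=
  [seq c <- H_cells n | c != (true, n%:Z - 1, 0%:Z)].

(* Finite index type for tiles, with a in [-2, n+1] and b in [-1, 2].
   Every tile contained in H_n (or P_n) has a in [-1, n-1] and b in [0, 1],
   so no tile of any tiling is missed. *)
Definition tbox (n : nat) := (bool * bool * 'I_(n + 4) * 'I_4)%type.

Definition tile_of (n : nat) (x : tbox n) : tile :=
  let: (l, u, i, j) := x in (l, (u, (nat_of_ord i)%:Z - 2, (nat_of_ord j)%:Z - 1)).

(* T is a tiling of the region R (given as a duplicate-free list of cells):
   the multiset union of the cells of the tiles of T is exactly R, i.e.
   every tile lies in R, the tiles cover R, and no cell is covered twice
   (equivalently: tiles have pairwise disjoint interiors). *)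
Definition is_tiling (n : nat) (R : seq cell) (T : {set tbox n}) : bool :=
  perm_eq (flatten [seq tile_cells (tile_of x) | x <- enum T]) R.

Definition num_small (n : nat) (T : {set tbox n}) : nat :=
  #|[set x in T | is_small (tile_of x)]|.

Definition Hnum (n : nat) : nat := #|[set T : {set tbox n} | is_tiling (H_cells n) T]|.
Definition Pnum (n : nat) : nat := #|[set T : {set tbox n} | is_tiling (P_cells n) T]|.

Definition phi (n : nat) : nat :=
  (\sum_(T : {set tbox n} | is_tiling (H_cells n) T) num_small T)%N.
Definition theta (n : nat) : nat :=
  (\sum_(T : {set tbox n} | is_tiling (P_cells n) T) num_small T)%N.

(* Main.v *)
Require Import Defs.
From HB Require Import structures.
From mathcomp Require Import all_boot all_order all_algebra zify.
Set Implicit Arguments. Unset Strict Implicit. Unset Printing Implicit Defensive.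
Import Order.TTheory GRing.Theory Num.Theory.
Local Open Scope ring_scope.

Lemma uniq_flatten_map (A B : eqType) (g : A -> seq B) (s : seq A) :
  uniq s -> (forall x, x \in s -> uniq (g x)) ->
  uniq (flatten (map g s)) <->
  (forall x y c, x \in s -> y \in s -> c \in g x -> c \in g y -> x = y).
Proof.
elim: s => [|a s IH] /= Us Ug; first by split => // _ x y c.
case/andP: Us => nas Us.
have IH' := IH Us (fun x xs => Ug x (@mem_behead _ (a :: s) x xs)).
rewrite cat_uniq Ug ?mem_head //=; split.
- case/andP => hn Uf x y c.
  have key : forall z, z \in s -> c \in g a -> c \in g z -> False.
    move=> z zs ca cz; move/hasP: hn; apply; exists c => //.
    by apply/flattenP; exists (g z) => //; apply/mapP; exists z.
  rewrite !inE => /orP[/eqP->|xs] /orP[/eqP->|ys] cx cy //.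
  + by case: (key y ys cx cy).
  + by case: (key x xs cy cx).
  + exact: (proj1 IH' Uf x y c).
- move=> H; apply/andP; split.
  + apply/hasPn => c /flattenP [t /mapP [z zs ->] cz]; apply/negP => ca.
    have eaz := H a z c (mem_head _ _) (@mem_behead _ (a :: s) z zs) ca cz.
    by move: nas; rewrite eaz zs.
  + apply/IH' => x y c xs ys; apply: H; by rewrite inE ?xs ?ys orbT.
Qed.

Definition cells n (x : tbox n) : seq cell := tile_cells (tile_of x).

Lemma tile_cells_uniq t : uniq (tile_cells t).
Proof.
case: t => [[]] [[[] a] b] //=; rewrite !inE !xpair_eqE /= ?andbT ?andbF ?orbF; lia.
Qed.

Lemma tilingP n (R : seq cell) (T : {set tbox n}) : uniq R ->
  is_tiling R T <->
  [/\ forall x, x \in T -> {subset cells x <= R},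
      forall c, c \in R -> exists2 x, x \in T & c \in cells x &
      forall x y c, x \in T -> y \in T -> c \in cells x -> c \in cells y -> x = y].
Proof.
move=> UR; rewrite /is_tiling.
set F := flatten _.
have memF c : reflect (exists2 x, x \in T & c \in cells x) (c \in F).
  apply: (iffP flattenP) => [[s /mapP [x xT ->]] cs|[x xT cx]].
    by exists x => //; rewrite mem_enum in xT.
  by exists (cells x) => //; apply/mapP; exists x; rewrite ?mem_enum.
have UF : uniq F <-> (forall x y c, x \in T -> y \in T -> c \in cells x -> c \in cells y -> x = y).
  rewrite /F; have := @uniq_flatten_map _ _ (@cells n) (enum T) (enum_uniq _)
    (fun x _ => tile_cells_uniq _).
  move=> E; split => H.
    by move=> x y c xT yT; apply: (proj1 E H); rewrite mem_enum.
  by apply: (proj2 E) => x y c; rewrite !mem_enum; apply: H.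
split.
- move=> pF; have uF : uniq F by rewrite (perm_uniq pF).
  split.
  + move=> x xT c cx; rewrite -(perm_mem pF); apply/memF; by exists x.
  + by move=> c cR; apply/memF; rewrite (perm_mem pF).
  + by apply/UF.
- case=> H1 H2 H3; apply: uniq_perm => //; first by apply/UF.
  move=> c; apply/memF/idP => [[x xT cx]|cR]; first exact: H1 cx.
  exact: H2.
Qed.

Definition inH (n : nat) (c : cell) : bool :=
  let: (u, a, b) := c in
  if u then ((b == 0) && (0 <= a) && (a <= n%:Z - 1)) || ((b == 1) && (0 <= a) && (a <= n%:Z - 2))
  else ((b == 0) && (0 <= a) && (a <= n%:Z - 2)) || ((b == 1) && (-1 <= a) && (a <= n%:Z - 2)).

Lemma mem_row (u0 : bool) (b0 d : int) (k : nat) (c : cell) :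
  (c \in [seq (u0, i%:Z + d, b0) | i <- iota 0 k]) =
  [&& c.1.1 == u0, c.2 == b0, d <= c.1.2 & c.1.2 < k%:Z + d].
Proof.
case: c => [[u a] b] /=; apply/mapP/idP.
- case=> i; rewrite mem_iota => /andP[_ ik] [-> -> ->]; rewrite !eqxx /=; lia.
- case/and4P => /eqP-> /eqP-> h1 h2; exists `|a - d|%N; first by rewrite mem_iota; lia.
  congr (_, _, _); lia.
Qed.

Lemma H_cellsE n : H_cells n =
  [seq (true, i%:Z + 0, 0%:Z) | i <- iota 0 n] ++
  [seq (false, i%:Z + 0, 0%:Z) | i <- iota 0 n.-1] ++
  [seq (true, i%:Z + 0, 1%:Z) | i <- iota 0 n.-1] ++
  [seq (false, i%:Z - 1, 1%:Z) | i <- iota 0 n].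
Proof. by rewrite /H_cells; congr (_ ++ _ ++ _ ++ _); apply: eq_map => i; rewrite addr0. Qed.

Lemma mem_H n c : (c \in H_cells n) = inH n c.
Proof.
rewrite H_cellsE !mem_cat !mem_row; case: c => [[u a] b] /=.
case: u => /=; apply/idP/idP; case: n => [|n] /=; lia.
Qed.

Lemma uniq_H n : uniq (H_cells n).
Proof.
rewrite H_cellsE !cat_uniq !map_inj_uniq ?iota_uniq //=; last 4 first.
- by move=> i j [] /eqP; lia.
- by move=> i j [] /eqP; lia.
- by move=> i j [] /eqP; lia.
- by move=> i j [] /eqP; lia.
rewrite andbT; apply/and3P; split; apply/hasPn => c;
  rewrite ?mem_cat !mem_row; case: c => [[u a] b] /=; lia.
Qed.

Lemma n4_gt0 n : (0 < n + 4)%N. Proof. by rewrite addn4. Qed.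
Definition ordn n (k : nat) : 'I_(n + 4) := Ordinal (ltn_pmod k (n4_gt0 n)).
Definition tbox_of n (t : tile) : tbox n :=
  let: (l, (u, a, b)) := t in (l, u, ordn n (absz (a + 2)), @inord 3 (absz (b + 1))).
Definition in_range n (t : tile) : bool :=
  let: (l, (u, a, b)) := t in [&& -2 <= a, a <= n%:Z + 1, -1 <= b & b <= 2].

Lemma tile_of_box n t : in_range n t -> tile_of (tbox_of n t) = t.
Proof.
case: t => l [[u a] b] /= /and4P[h1 h2 h3 h4].
rewrite /= modn_small ?inordK; try lia.
congr (_, (_, _, _)); lia.
Qed.

Lemma tbox_ofK n x : tbox_of n (tile_of x) = x.
Proof.
case: x => [[[l u] i] j] /=; congr (_, _, _, _); apply: val_inj => /=.
- have -> : absz (i%:Z - 2 + 2) = i by lia.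
  by rewrite modn_small.
- have -> : absz (j%:Z - 1 + 1) = j by lia.
  by rewrite inordK.
Qed.

Lemma tile_of_inj n : injective (@tile_of n).
Proof. exact: can_inj (@tbox_ofK n). Qed.

Lemma cells_box n t : in_range n t -> cells (tbox_of n t) = tile_cells t.
Proof. by move=> h; rewrite /cells tile_of_box. Qed.

Definition Ut (k : nat) : tile := (true, (true, k%:Z, 0)).
Definition Dt (k : nat) : tile := (true, (false, k%:Z - 1, 0)).
Definition lcells (k l : nat) : seq cell :=
  if l == 1%N then tile_cells (Ut k) else if l == 2%N then tile_cells (Dt k) else [::].
Definition covered (w : seq nat) (c : cell) : bool :=
  has (fun k => c \in lcells k (nth 0%N w k)) (iota 0 (size w)).
Definition tw_pred (R : seq cell) (w : seq nat) (t : tile) : bool :=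
  let: (l, (u, a, b)) := t in
  if l then (let k := if u then a else a + 1 in
      [&& b == 0, 0 <= k, k < (size w)%:Z & nth 0%N w (absz k) == (if u then 1 else 2)%N])
  else ((u, a, b) \in R) && ~~ covered w (u, a, b).
Definition Tw n R w : {set tbox n} := [set x | tw_pred R w (tile_of x)].

Lemma tw_large R w c : tw_pred R w (true, c) <->
  exists2 k, (k < size w)%N &
    ((nth 0%N w k = 1%N) /\ (true, c) = Ut k) \/ ((nth 0%N w k = 2%N) /\ (true, c) = Dt k).
Proof.
case: c => [[u a] b] /=; split.
- case: u => /and4P[/eqP-> h0 h1 /eqP hn].
  + exists (absz a); first lia.
    by left; split => //; rewrite /Ut; congr (_, (_, _, _)); lia.
  + exists (absz (a + 1)); first lia.
    by right; split => //; rewrite /Dt; congr (_, (_, _, _)); lia.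
- case=> k kw [[wk E]|[wk E]]; case: E => -> -> -> /=.
  + by rewrite wk eqxx andbT; lia.
  + by rewrite subrK absz_nat wk eqxx /= andbT; lia.
Qed.

Lemma range_Ut n k : (k < n.-1)%N -> in_range n (Ut k).
Proof. move=> h; rewrite /in_range /Ut; lia. Qed.
Lemma range_Dt n k : (k < n.-1)%N -> in_range n (Dt k).
Proof. move=> h; rewrite /in_range /Dt; lia. Qed.
Lemma range_H n c : inH n c -> in_range n (false, c).
Proof. case: c => [[u a] b]; rewrite /in_range /inH; case: u; lia. Qed.

Lemma tw_small R w c : tw_pred R w (false, c) = (c \in R) && ~~ covered w c.
Proof. by case: c => [[u a] b]. Qed.

Lemma coveredP w c k : (k < size w)%N -> c \in lcells k (nth 0%N w k) -> covered w c.
Proof. by move=> kw hc; apply/hasP; exists k => //; rewrite mem_iota. Qed.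

Definition wok (w : seq nat) := forall k, (k.+1 < size w)%N ->
  ~ ((nth 0%N w k = 1%N /\ nth 0%N w k.+1 = 1%N) \/ (nth 0%N w k = 2%N /\ nth 0%N w k.+1 = 2%N)).

Lemma UU_meet i j c : c \in tile_cells (Ut i) -> c \in tile_cells (Ut j) ->
  (i = j \/ j = i.+1 \/ i = j.+1)%N.
Proof. case: c => [[u a] b]; rewrite /= !inE !xpair_eqE /=; lia. Qed.
Lemma DD_meet i j c : c \in tile_cells (Dt i) -> c \in tile_cells (Dt j) ->
  (i = j \/ j = i.+1 \/ i = j.+1)%N.
Proof. case: c => [[u a] b]; rewrite /= !inE !xpair_eqE /=; lia. Qed.
Lemma UD_meet i j c : c \in tile_cells (Ut i) -> c \in tile_cells (Dt j) -> i = j.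
Proof. case: c => [[u a] b]; rewrite /= !inE !xpair_eqE /=; lia. Qed.

Lemma tw_tiling n R w : uniq R -> (forall c, c \in R -> inH n c) -> size w = n.-1 ->
  wok w -> (forall k, (k < size w)%N -> {subset lcells k (nth 0%N w k) <= R}) ->
  is_tiling R (Tw n R w).
Proof.
move=> UR HR sw Hw Hl; apply/tilingP => //; split.
- move=> x; rewrite inE /cells; case: (tile_of x) => [[] c].
  + move/tw_large => [k kw [[wk ->]|[wk ->]]] c' hc; apply: (Hl k kw);
      by rewrite /lcells wk.
  + rewrite tw_small => /andP[cR _] c'; by rewrite /= inE => /eqP->.
- move=> c cR; case Cv: (covered w c).
  + move/hasP: Cv => [k]; rewrite mem_iota => /andP[_ kw].
    have kn : (k < n.-1)%N by rewrite -sw.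
    rewrite /lcells; case: ifP => [/eqP w1 hc|_].
      exists (tbox_of n (Ut k)); last by rewrite cells_box ?range_Ut.
      rewrite inE tile_of_box ?range_Ut //; apply/tw_large; exists k => //; by left.
    case: ifP => [/eqP w2 hc|_ //].
    exists (tbox_of n (Dt k)); last by rewrite cells_box ?range_Dt.
    rewrite inE tile_of_box ?range_Dt //; apply/tw_large; exists k => //; by right.
  + have hr := range_H (HR c cR).
    exists (tbox_of n (false, c)); last by rewrite cells_box // inE.
    by rewrite inE tile_of_box // tw_small cR Cv.
- move=> x y c; rewrite !inE /cells => hx hy h1 h2.
  apply: (@tile_of_inj n x y); move: hx hy h1 h2.
  case: (tile_of x) => [[] cx]; case: (tile_of y) => [[] cy].
  + move=> /tw_large [k1 k1w H1] /tw_large [k2 k2w H2].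
    case: H1 => [[w1 ->]|[w1 ->]]; case: H2 => [[w2 ->]|[w2 ->]] h1 h2.
    * case: (UU_meet h1 h2) => [->//|[e|e]]; subst.
        by case: (Hw k1 k2w); left.
      by case: (Hw k2 k1w); left.
    * by move: w2; rewrite -(UD_meet h1 h2) w1.
    * by move: w2; rewrite (UD_meet h2 h1) w1.
    * case: (DD_meet h1 h2) => [->//|[e|e]]; subst.
        by case: (Hw k1 k2w); right.
      by case: (Hw k2 k1w); right.
  + move=> /tw_large [k1 k1w H1]; rewrite tw_small => /andP[_ ncv] h1.
    rewrite /= inE => /eqP ec; subst cy; case/negP: ncv.
    apply: (coveredP k1w); rewrite /lcells.
    by case: H1 => [[-> E]|[-> E]]; rewrite -E.
  + rewrite tw_small => /andP[_ ncv] /tw_large [k1 k1w H1].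
    rewrite /= inE => /eqP ec h1; subst cx; case/negP: ncv.
    apply: (coveredP k1w); rewrite /lcells.
    by case: H1 => [[-> E]|[-> E]]; rewrite -E.
  + by move=> _ _; rewrite /= !inE => /eqP-> /eqP->.
Qed.

Definition word_of n (T : {set tbox n}) : seq nat :=
  mkseq (fun k => if tbox_of n (Ut k) \in T then 1%N
                  else if tbox_of n (Dt k) \in T then 2%N else 0%N) n.-1.

Lemma tiling_word n R (T : {set tbox n}) : uniq R -> (forall c, c \in R -> inH n c) ->
  is_tiling R T ->
  [/\ T = Tw n R (word_of T), wok (word_of T) &
      forall k, (k < n.-1)%N -> {subset lcells k (nth 0%N (word_of T) k) <= R}].
Proof.
move=> UR HR /(tilingP _ UR) [H1 H2 H3].
set w := word_of T.
have sw : size w = n.-1 by rewrite size_mkseq.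
have nthw k : (k < n.-1)%N -> nth 0%N w k =
   if tbox_of n (Ut k) \in T then 1%N else if tbox_of n (Dt k) \in T then 2%N else 0%N.
  by move=> kn; rewrite nth_mkseq.
have L1 x : x \in T -> forall c, tile_of x = (true, c) ->
    exists2 k, (k < n.-1)%N & x = tbox_of n (Ut k) \/ x = tbox_of n (Dt k).
  move=> xT c E.
  have hc c' : c' \in tile_cells (true, c) -> inH n c'.
    by move=> h; apply: HR; apply: (H1 x xT); rewrite /cells E.
  case: c E hc => [[u a] b] E hc.
  case: u E hc => E hc.
  - have h1 : inH n (true, a, b) by apply: hc; rewrite !inE !eqxx ?orbT.
    have h2 : inH n (true, a + 1, b) by apply: hc; rewrite !inE !eqxx ?orbT.
    have h3 : inH n (true, a, b + 1) by apply: hc; rewrite !inE !eqxx ?orbT.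
    have h4 : inH n (false, a, b) by apply: hc; rewrite !inE !eqxx ?orbT.
    move: h1 h2 h3 h4; rewrite /inH => h1 h2 h3 h4.
    exists (absz a); first lia.
    left; rewrite -(tbox_ofK x) E; congr (tbox_of n _).
    rewrite /Ut; congr (_, (_, _, _)); lia.
  - have h1 : inH n (false, a + 1, b) by apply: hc; rewrite !inE !eqxx ?orbT.
    have h2 : inH n (false, a, b + 1) by apply: hc; rewrite !inE !eqxx ?orbT.
    have h3 : inH n (false, a + 1, b + 1) by apply: hc; rewrite !inE !eqxx ?orbT.
    have h4 : inH n (true, a + 1, b + 1) by apply: hc; rewrite !inE !eqxx ?orbT.
    move: h1 h2 h3 h4; rewrite /inH => h1 h2 h3 h4.
    exists (absz (a + 1)); first lia.
    right; rewrite -(tbox_ofK x) E; congr (tbox_of n _).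
    rewrite /Dt; congr (_, (_, _, _)); lia.
have UD k : (k < n.-1)%N -> tbox_of n (Ut k) \in T -> tbox_of n (Dt k) \in T -> False.
  move=> kn hU hD.
  have m1 : (false, k%:Z, 0) \in cells (tbox_of n (Ut k)).
    by rewrite cells_box ?range_Ut // /= !inE !xpair_eqE /=; lia.
  have m2 : (false, k%:Z, 0) \in cells (tbox_of n (Dt k)).
    by rewrite cells_box ?range_Dt // /= !inE !xpair_eqE /=; lia.
  move: (H3 _ _ _ hU hD m1 m2) => /(congr1 (@tile_of n)).
  by rewrite !tile_of_box ?range_Ut ?range_Dt.
have UinT k : (k < n.-1)%N -> tbox_of n (Ut k) \in T -> nth 0%N w k = 1%N.
  by move=> kn h; rewrite nthw // h.
have DinT k : (k < n.-1)%N -> tbox_of n (Dt k) \in T -> nth 0%N w k = 2%N.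
  move=> kn h; rewrite nthw // h; case: ifP => // hU; case: (UD k kn hU h).
have wk1 k : (k < n.-1)%N -> nth 0%N w k = 1%N -> tbox_of n (Ut k) \in T.
  by move=> kn; rewrite nthw //; case: ifP => //; case: ifP.
have wk2 k : (k < n.-1)%N -> nth 0%N w k = 2%N -> tbox_of n (Dt k) \in T.
  by move=> kn; rewrite nthw //; case: ifP => //; case: ifP.
split.
- apply/setP => x; rewrite inE; case E: (tile_of x) => [[] c].
  + apply/idP/idP.
    * move=> xT; apply/tw_large; case: (L1 x xT c E) => k kn [ex|ex]; exists k; rewrite ?sw //.
        left; split; first by apply: UinT; rewrite -?ex.
        by rewrite -E ex tile_of_box ?range_Ut.
      right; split; first by apply: DinT; rewrite -?ex.
      by rewrite -E ex tile_of_box ?range_Dt.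
    * move/tw_large; case=> k; rewrite sw => kn [[wk Et]|[wk Et]];
        rewrite -(tbox_ofK x) E Et; [exact: wk1|exact: wk2].
  + rewrite tw_small; apply/idP/andP.
    * move=> xT; split; first by apply: (H1 x xT); rewrite /cells E /= inE.
      apply/negP => /hasP [k]; rewrite mem_iota sw => /andP[_ kn].
      have cx : c \in cells x by rewrite /cells E /= inE.
      rewrite /lcells; case: ifP => [/eqP w1 hc|_].
        have := H3 _ _ c xT (wk1 k kn w1) cx; rewrite cells_box ?range_Ut // => /(_ hc).
        by move/(congr1 (@tile_of n)); rewrite E tile_of_box ?range_Ut.
      case: ifP => [/eqP w2 hc|_ //].
      have := H3 _ _ c xT (wk2 k kn w2) cx; rewrite cells_box ?range_Dt // => /(_ hc).
      by move/(congr1 (@tile_of n)); rewrite E tile_of_box ?range_Dt.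
    * case=> cR ncv; case: (H2 c cR) => y yT hc.
      move: hc; rewrite /cells; case Ey: (tile_of y) => [[] cy] hc.
        case: (L1 y yT cy Ey) => k kn [ey|ey]; case/negP: ncv;
          apply: (@coveredP _ _ k); rewrite ?sw // /lcells; rewrite ey in yT Ey.
          have e : Ut k = (true, cy) by rewrite -Ey tile_of_box ?range_Ut.
          by rewrite (UinT k kn yT) eqxx e.
        have e : Dt k = (true, cy) by rewrite -Ey tile_of_box ?range_Dt.
        by rewrite (DinT k kn yT) e.
      move: hc; rewrite /= inE => /eqP ec; subst cy.
      by rewrite -(tbox_ofK x) E -Ey tbox_ofK.
- move=> k; rewrite sw => kn [[a1 a2]|[a1 a2]].
  + have m1 : (true, k%:Z + 1, 0) \in cells (tbox_of n (Ut k)).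
      by rewrite cells_box ?range_Ut ?(ltnW kn) // /= !inE !xpair_eqE /=; lia.
    have m2 : (true, k%:Z + 1, 0) \in cells (tbox_of n (Ut k.+1)).
      by rewrite cells_box ?range_Ut // /= !inE !xpair_eqE /=; lia.
    move: (H3 _ _ _ (wk1 k (ltnW kn) a1) (wk1 k.+1 kn a2) m1 m2) => /(congr1 (@tile_of n)).
    by rewrite !tile_of_box ?range_Ut ?(ltnW kn) // => -[] /eqP; lia.
  + have m1 : (false, k%:Z, 1) \in cells (tbox_of n (Dt k)).
      by rewrite cells_box ?range_Dt ?(ltnW kn) // /= !inE !xpair_eqE /=; lia.
    have m2 : (false, k%:Z, 1) \in cells (tbox_of n (Dt k.+1)).
      by rewrite cells_box ?range_Dt // /= !inE !xpair_eqE /=; lia.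
    move: (H3 _ _ _ (wk2 k (ltnW kn) a1) (wk2 k.+1 kn a2) m1 m2) => /(congr1 (@tile_of n)).
    by rewrite !tile_of_box ?range_Dt ?(ltnW kn) // => -[] /eqP; lia.
- move=> k kn c'; rewrite /lcells; case: ifP => [/eqP w1|_].
    by move=> hc; apply: (H1 _ (wk1 k kn w1)); rewrite cells_box ?range_Ut.
  case: ifP => [/eqP w2|_ //].
  by move=> hc; apply: (H1 _ (wk2 k kn w2)); rewrite cells_box ?range_Dt.
Qed.

Definition nb (x y : nat) : bool := ~~ (((x == 1%N) && (y == 1%N)) || ((x == 2%N) && (y == 2%N))).
Definition wokb (w : seq nat) : bool := if w is x :: p then path nb x p else true.
Definition validb (m : nat) (w : seq nat) : bool :=
  [&& size w == m, all (fun l => (l < 3)%N) w & wokb w].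

Lemma wokP w : reflect (wok w) (wokb w).
Proof.
case: w => [|x p] /=; first by constructor => k.
apply: (iffP (pathP 0%N)) => H k Hk.
- have := H k Hk; rewrite /nb /= => /negP hn hc; apply: hn.
  by case: hc => -[-> ->].
- apply/negP => /orP[] /andP[/eqP a1 /eqP a2]; apply: (H k Hk); [left|right]; by split.
Qed.

Lemma wokb_rcons w l : wokb (rcons w l) = wokb w && nb (last 0%N w) l.
Proof. by case: w => [|x p] //=; rewrite rcons_path. Qed.

Lemma validb_rcons m w l :
  validb m.+1 (rcons w l) = [&& validb m w, (l < 3)%N & nb (last 0%N w) l].
Proof.
rewrite /validb size_rcons eqSS all_rcons wokb_rcons.
by case: (size w == m); case: (l < 3)%N; case: (all _ w); case: (wokb w).
Qed.

Lemma validb_last m w : validb m w -> (last 0%N w < 3)%N.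
Proof.
case/and3P => _ /allP H _; case/lastP: w H => [|w l] H //.
by rewrite last_rcons; apply: H; rewrite mem_rcons mem_head.
Qed.

Fixpoint Ws (m : nat) : seq (seq nat) * seq (seq nat) * seq (seq nat) :=
  match m with
  | 0%N => ([:: [::]], [::], [::])
  | m'.+1 => let: (e, u, d) := Ws m' in
      ([seq rcons w 0%N | w <- e ++ u ++ d], [seq rcons w 1%N | w <- e ++ d],
       [seq rcons w 2%N | w <- e ++ u])
  end.

Lemma mem_map_rcons (s : seq (seq nat)) l0 w l :
  (rcons w l \in [seq rcons v l0 | v <- s]) = (l == l0) && (w \in s).
Proof.
apply/mapP/andP => [[v vs /eqP]|[/eqP-> ws]]; last by exists w.
by rewrite eqseq_rcons => /andP[/eqP-> /eqP->].
Qed.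

Lemma mem_map_rcons0 (s : seq (seq nat)) l0 :
  ([::] \in [seq rcons v l0 | v <- s]) = false.
Proof. by apply/mapP => -[v _] /eqP; rewrite eq_sym -size_eq0 size_rcons. Qed.

Lemma mem_Ws m w :
  [/\ (w \in (Ws m).1.1) = validb m w && (last 0%N w == 0%N),
      (w \in (Ws m).1.2) = validb m w && (last 0%N w == 1%N) &
      (w \in (Ws m).2) = validb m w && (last 0%N w == 2%N)].
Proof.
elim: m w => [|m IH] w.
  rewrite /= /validb !inE; case: w => [|x p] //=.
simpl Ws; case: (Ws m) IH => [[e u] d] /= IH.
case/lastP: w => [|w l].
  by rewrite !mem_map_rcons0 /validb.
rewrite !mem_map_rcons !mem_cat validb_rcons last_rcons.
case: (IH w) => -> -> ->.
case V: (validb m w) => /=; last by rewrite !andbF.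
have := validb_last V; rewrite /nb.
case: (last 0%N w) => [|[|[|k]]] //=; case: l => [|[|[|l]]] //=.
Qed.

Lemma uniq_Ws m : let: (e, u, d) := Ws m in uniq (e ++ u ++ d).
Proof.
elim: m => [|m] //=; case: (Ws m) => [[e u] d] U.
have Ued : uniq (e ++ d).
  apply: subseq_uniq U; exact: cat_subseq (subseq_refl e) (suffix_subseq u d).
have Ueu : uniq (e ++ u).
  apply: subseq_uniq U; exact: cat_subseq (subseq_refl e) (prefix_subseq u d).
rewrite !cat_uniq !map_inj_uniq ?Ued ?Ueu ?U; try exact: rcons_injl.
rewrite /= andbT; apply/andP; split.
- apply/hasPn => z; rewrite mem_cat => /orP[] /mapP[v _ ->];
  by rewrite mem_map_rcons.
- apply/hasPn => z /mapP[v _ ->]; by rewrite mem_map_rcons.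
Qed.

Definition cnt (w : seq nat) : nat := count (fun l => l != 0%N) w.

Lemma cnt_rcons w l : cnt (rcons w l) = (cnt w + (l != 0%N))%N.
Proof. by rewrite /cnt -cats1 count_cat /= addn0. Qed.

Lemma sum_map_rcons (s : seq (seq nat)) l :
  (\sum_(w <- [seq rcons v l | v <- s]) cnt w = \sum_(w <- s) cnt w + (l != 0%N) * size s)%N.
Proof.
rewrite big_map; under eq_bigr do rewrite cnt_rcons.
by rewrite big_split /= big_const_seq count_predT iter_addn_0.
Qed.

Lemma count_Ws m : let: (e, u, d) := Ws m in
  [/\ size u = size d, (\sum_(w <- u) cnt w = \sum_(w <- d) cnt w)%N,
      (2 * (\sum_(w <- e) cnt w + \sum_(w <- u) cnt w + \sum_(w <- d) cnt w)
         + (size e + size d) = m.+1 * (size e + size u + size d))%N &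
      (2 * (\sum_(w <- e) cnt w + \sum_(w <- d) cnt w) = m * (size e + size d))%N].
Proof.
elim: m => [|m] /=; first by rewrite !big_nil !big_seq1.
case: (Ws m) => [[e u] d] [h1 h2 h3 h4].
rewrite !sum_map_rcons !size_map !size_cat !big_cat /=.
move: h3 h4; rewrite h1 h2 => h3 h4.
split; try lia.
Qed.

Lemma size_cells n (x : tbox n) :
  size (cells x) = (if is_small (tile_of x) then 1 else 4)%N.
Proof. by rewrite /cells; case: (tile_of x) => [[] [[[] a] b]]. Qed.

Lemma small_large n R (T : {set tbox n}) : uniq R -> is_tiling R T ->
  (num_small T + 4 * #|[set x in T | ~~ is_small (tile_of x)]|)%N = size R.
Proof.
move=> UR pT; rewrite -(perm_size pT) size_flatten /shape -map_comp sumnE big_map.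
rewrite big_enum /=.
under eq_bigr do rewrite -/(cells _) size_cells.
rewrite (bigID (fun x => is_small (tile_of x))) /=.
congr (_ + _)%N.
- rewrite /num_small -sum1_card; apply: eq_big => x; rewrite ?inE //.
  by case/andP => _ ->.
- rewrite -sum1_card big_distrr /=; apply: eq_big => x; rewrite ?inE //.
  by case/andP => _ /negbTE ->.
Qed.

Lemma large_Tw n R w : size w = n.-1 -> all (fun l => (l < 3)%N) w ->
  #|[set x in Tw n R w | ~~ is_small (tile_of x)]| = cnt w.
Proof.
move=> sw aw.
pose f (k : 'I_n.-1) := tbox_of n (if nth 0%N w k == 1%N then Ut k else Dt k).
pose K := [set k : 'I_n.-1 | nth 0%N w k != 0%N].
have hl k : (k < n.-1)%N -> (nth 0%N w k < 3)%N.
  by move=> kn; apply: (allP aw); rewrite mem_nth // sw.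
have rng (k : 'I_n.-1) : in_range n (if nth 0%N w k == 1%N then Ut k else Dt k).
  by case: ifP => _; [apply: range_Ut | apply: range_Dt].
have -> : [set x in Tw n R w | ~~ is_small (tile_of x)] = f @: K.
  have ns1 c : ~~ is_small (true, c) = true by [].
  have ns2 c : ~~ is_small (false, c) = false by [].
  apply/setP => x; rewrite !inE; case E: (tile_of x) => [[] c]; rewrite ?ns1 ?ns2 ?andbT ?andbF.
  - apply/idP/imsetP.
    + move/(tw_large R w c) => [k kw [[wk Et]|[wk Et]]]; rewrite sw in kw;
        exists (Ordinal kw); rewrite ?inE /= ?wk //;
        by rewrite /f /= wk /= -(tbox_ofK x) E Et.
    + case=> k; rewrite inE => kK ex; move: E; rewrite ex /f tile_of_box // => Ek.
      apply/(tw_large R w c); exists k; first by rewrite sw.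
      have := hl k (ltn_ord k); move: kK Ek.
      by case: (nth 0%N w k) => [|[|[|]]] //= _ Ek _; [left|right]; rewrite Ek.
  - apply/esym/negbTE/imsetP => -[k _ ex]; move: E; rewrite ex /f tile_of_box //.
    by case: ifP.
rewrite card_in_imset; last first.
  move=> k1 k2 _ _ /(congr1 (@tile_of n)); rewrite /f !tile_of_box //.
  rewrite /Ut /Dt; case: ifP; case: ifP => _ _ [] // e; apply: val_inj => /=; lia.
rewrite -sum1_card (eq_bigl (fun k : 'I_n.-1 => nth 0%N w k != 0%N)); last first.
  by move=> k; rewrite inE.
rewrite -(big_mkord (fun k => nth 0%N w k != 0%N) (fun _ => 1%N)) sum1_count /index_iota subn0.
by rewrite /cnt -{2}(mkseq_nth 0%N w) sw /mkseq count_map.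
Qed.

Lemma Tw_inj n R w1 w2 : size w1 = n.-1 -> size w2 = n.-1 ->
  all (fun l => (l < 3)%N) w1 -> all (fun l => (l < 3)%N) w2 ->
  Tw n R w1 = Tw n R w2 -> w1 = w2.
Proof.
move=> s1 s2 a1 a2 E; apply: (@eq_from_nth _ 0%N) => [|k kn]; first by rewrite s1 s2.
rewrite s1 in kn.
have l1 : (nth 0%N w1 k < 3)%N by apply: (allP a1); rewrite mem_nth // s1.
have l2 : (nth 0%N w2 k < 3)%N by apply: (allP a2); rewrite mem_nth // s2.
have := congr1 (fun T : {set tbox n} => tbox_of n (Ut k) \in T) E.
have := congr1 (fun T : {set tbox n} => tbox_of n (Dt k) \in T) E.
rewrite !inE !tile_of_box ?range_Ut ?range_Dt // /= !subrK s1 s2 /=.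
have -> : (k%:Z < n.-1%:Z) = true by lia.
rewrite /=; lia.
Qed.

Lemma region_sums n R (L : seq (seq nat)) : uniq R -> uniq L ->
  (forall w, w \in L -> size w = n.-1 /\ all (fun l => (l < 3)%N) w) ->
  (forall T : {set tbox n}, is_tiling R T = (T \in map (Tw n R) L)) ->
  #|[set T : {set tbox n} | is_tiling R T]| = size L /\
  ((\sum_(T : {set tbox n} | is_tiling R T) num_small T) + 4 * \sum_(w <- L) cnt w = size R * size L)%N.
Proof.
move=> UR UL HL HT.
have inj : {in L &, injective (Tw n R)}.
  move=> w1 w2 /HL[s1 a1] /HL[s2 a2]; exact: Tw_inj.
have U : uniq (map (Tw n R) L) by rewrite (map_inj_in_uniq inj).
split.
  rewrite -(size_map (Tw n R)) -(card_uniqP U); apply: eq_card => T; by rewrite inE HT.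
rewrite (eq_bigl (mem (map (Tw n R) L))); last by move=> T; rewrite HT.
rewrite -big_uniq // big_map big_distrr -big_split /= big_seq.
rewrite (eq_bigr (fun _ => size R)); last first.
  move=> w wL; case: (HL w wL) => sw aw.
  rewrite -(large_Tw R sw aw) (small_large UR) // HT; exact: map_f.
by rewrite -big_seq big_const_seq count_predT iter_addn_0.
Qed.

Lemma lcells_H n k l : (k < n.-1)%N -> {subset lcells k l <= H_cells n}.
Proof.
move=> kn c; rewrite mem_H /lcells; case: ifP => _; [|case: ifP => _ //];
  case: c => [[u a] b]; rewrite /= !inE !xpair_eqE /=; case: u => /=; lia.
Qed.

Lemma Wmem m w : let: (e, u, d) := Ws m in
  (w \in e ++ u ++ d) = validb m w /\ (w \in e ++ d) = validb m w && (last 0%N w != 1%N).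
Proof.
have := mem_Ws m w; case: (Ws m) => [[e u] d] /= [h1 h2 h3].
rewrite !mem_cat h1 h2 h3.
case V: (validb m w) => //=; have := validb_last V.
by case: (last 0%N w) => [|[|[|k]]].
Qed.

Lemma validbP m w : validb m w -> [/\ size w = m, all (fun l => (l < 3)%N) w & wok w].
Proof. by case/and3P => /eqP -> -> /wokP. Qed.

Lemma word_valid n (T : {set tbox n}) : wok (word_of T) -> validb n.-1 (word_of T).
Proof.
move=> wk; rewrite /validb size_mkseq eqxx /=; apply/andP; split; last exact/wokP.
apply/allP => l /mapP[k _ ->]; by case: ifP => //; case: ifP.
Qed.

Lemma size_H n : size (H_cells n) = (n + n.-1 + n.-1 + n)%N.
Proof. rewrite /H_cells !size_cat !size_map !size_iota; lia. Qed.

Lemma size_P n : (0 < n)%N -> size (P_cells n) = (size (H_cells n)).-1.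
Proof.
move=> n0; rewrite /P_cells size_filter.
set c0 := (true, n%:Z - 1, 0%:Z).
have e : count (fun c => c != c0) (H_cells n) = count (predC (pred1 c0)) (H_cells n).
  by apply: eq_count.
have := count_predC (pred1 c0) (H_cells n).
have c0H : c0 \in H_cells n by rewrite mem_H /c0 /=; lia.
have := count_uniq_mem c0 (uniq_H n); rewrite c0H => h1.
rewrite e; move: h1 => /= h1.
by rewrite h1 => <-; rewrite add1n.
Qed.

Lemma H_region n : let: (e, u, d) := Ws n.-1 in
  forall T : {set tbox n}, is_tiling (H_cells n) T = (T \in map (Tw n (H_cells n)) (e ++ u ++ d)).
Proof.
have := Wmem n.-1; case: (Ws n.-1) => [[e u] d] WM T.
have HR c : c \in H_cells n -> inH n c by rewrite mem_H.
apply/idP/mapP.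
- move=> tT; case: (tiling_word (uniq_H n) HR tT) => eT wk _.
  exists (word_of T) => //; case: (WM (word_of T)) => -> _; exact: word_valid.
- case=> w wL ->; case: (WM w) => h _; rewrite h in wL.
  case: (validbP wL) => sw aw wk.
  apply: tw_tiling => //; first exact: uniq_H.
  by move=> k kw; apply: lcells_H; rewrite -sw.
Qed.

Lemma P_region n : (0 < n)%N -> let: (e, u, d) := Ws n.-1 in
  forall T : {set tbox n}, is_tiling (P_cells n) T = (T \in map (Tw n (P_cells n)) (e ++ d)).
Proof.
move=> n0; have := Wmem n.-1; case: (Ws n.-1) => [[e u] d] WM T.
have UP : uniq (P_cells n) by rewrite filter_uniq // uniq_H.
have memP c : (c \in P_cells n) = (c \in H_cells n) && (c != (true, n%:Z - 1, 0%:Z)).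
  by rewrite mem_filter andbC.
have HR c : c \in P_cells n -> inH n c by rewrite memP mem_H => /andP[].
apply/idP/mapP.
- move=> tT; case: (tiling_word UP HR tT) => eT wk Hl.
  exists (word_of T) => //; case: (WM (word_of T)) => _ ->.
  rewrite word_valid //=.
  have sw : size (word_of T) = n.-1 by rewrite size_mkseq.
  have sn : (size (word_of T)).+1 = n by rewrite sw prednK.
  move: Hl; rewrite -sw; case E: (size (word_of T)) => [|m] Hl.
    by move/eqP: E; rewrite size_eq0 => /eqP->.
  rewrite -nth_last E /=; apply/negP => /eqP w1.
  have := Hl m (ltnSn m) (true, m%:Z + 1, 0).
  rewrite w1 /lcells /= memP !inE !eqxx /= orbT => /(_ isT) /andP[_].
  rewrite E in sn; rewrite xpair_eqE /=.
by rewrite !xpair_eqE /=; lia.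
- case=> w wL ->; case: (WM w) => _ h; rewrite h in wL.
  case/andP: wL => wv wl.
  case: (validbP wv) => sw aw wk.
  apply: tw_tiling => //.
  move=> k kw c hc.
  have kn : (k < n.-1)%N by rewrite -sw.
  have sn : (size w).+1 = n by rewrite sw prednK.
  rewrite memP (lcells_H kn hc) /=.
  move: hc; rewrite /lcells; case: ifP => [/eqP w1|_].
    have kl : (k.+1 < size w)%N.
      rewrite ltn_neqAle kw andbT; apply/negP => /eqP ek.
      by move: wl; rewrite -nth_last -ek /= w1.
    case: c => [[uu a] b]; rewrite /= !inE !xpair_eqE /=; lia.
  case: ifP => [/eqP w2|_ //].
  case: c => [[uu a] b]; rewrite /= !inE !xpair_eqE /=; lia.
Qed.

Local Close Scope ring_scope.

Theorem theorem6 (n : nat) : (1 <= n)%N ->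
  phi n = (2 * (n - 1) * Hnum n + 2 * Pnum n)%N /\
  theta n = ((2 * n - 1) * Pnum n)%N.
Proof.
move=> n1.
have UP : uniq (P_cells n) by rewrite filter_uniq // uniq_H.
have HH := H_region n; have PP := P_region n1; have CW := count_Ws n.-1;
have UW := uniq_Ws n.-1; have WM := Wmem n.-1.
move: HH PP CW UW WM; case: (Ws n.-1) => [[e u] d] HH PP [c1 c2 c3 c4] UW WM.
have HLH w : w \in e ++ u ++ d -> size w = n.-1 /\ all (fun l => (l < 3)%N) w.
  by case: (WM w) => -> _ /validbP [].
have HLP w : w \in e ++ d -> size w = n.-1 /\ all (fun l => (l < 3)%N) w.
  by case: (WM w) => _ -> /andP[/validbP []].
have Ued : uniq (e ++ d).
  apply: subseq_uniq UW; exact: cat_subseq (subseq_refl e) (suffix_subseq u d).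
case: (region_sums (uniq_H n) UW HLH HH) => cH sH.
case: (region_sums UP Ued HLP PP) => cP sP.
rewrite /phi /theta /Hnum /Pnum cH cP.
have sPs : size (P_cells n) = (n + n.-1 + n.-1 + n.-1)%N.
  by rewrite size_P // size_H -{4}(prednK n1) addnS.
move: sH sP; rewrite sPs size_H !big_cat !size_cat /=.
set m := n.-1 in c3 c4 sPs *.
have nm : n = m.+1 by rewrite prednK.
move: c3 c4; rewrite nm.
set A := (\sum_(T : {set tbox m.+1} | is_tiling (H_cells m.+1) T) num_small T)%N.
set B := (\sum_(T : {set tbox m.+1} | is_tiling (P_cells m.+1) T) num_small T)%N.
move=> c3 c4 sH sP.
split; nia.
Qed.
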